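(* Let $k\ge 1$ and $r\ge 0$ be integers and let $G=(V,E)$ be a $(k+r)$-regular graph. A set $S\subseteq V$ is a $k$-conversion set of $G$ if and only if $G[V-S]$ is $r$-degenerate.
   Context: For a graph $G=(V,E)$, a positive integer $k$ and a set $S_0\subseteq V$, the irreversible $k$-threshold conversion process is defined by: for $t=1,2,\dots$, $S_t$ is obtained from $S_{t-1}$ by adjoining all vertices having at least $k$ neighbours in $S_{t-1}$. The set $S_0$ is a $k$-conversion set of $G$ if $S_t=V$ for some $t\ge 0$. A graph is $r$-degenerate if every (nonempty) induced subgraph of it has a vertex of degree at most $r$. *)

(* Defs.v *)
From mathcomp Require Import all_boot.
Set Implicit Arguments.
Unset Strict Implicit.
Unset Printing Implicit Defensive.

Definition simple_graph (T : finType) (e : rel T) : Prop :=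
  symmetric e /\ irreflexive e.

Definition nbhd (T : finType) (e : rel T) (x : T) : {set T} := [set y | e x y].

Definition regular (T : finType) (e : rel T) (d : nat) : Prop :=
  forall x : T, #|nbhd e x| = d.

Definition conv_step (T : finType) (e : rel T) (k : nat) (S : {set T}) : {set T} :=
  S :|: [set x | k <= #|nbhd e x :&: S|].

Definition conv_iter (T : finType) (e : rel T) (k : nat) (S0 : {set T}) (t : nat) : {set T} :=
  iter t (conv_step e k) S0.

Definition conversion_set (T : finType) (e : rel T) (k : nat) (S0 : {set T}) : Prop :=
  exists t : nat, conv_iter e k S0 t = [set: T].

Definition degenerate_induced (T : finType) (e : rel T) (W : {set T}) (r : nat) : Prop :=
  forall A : {set T}, A \subset W -> A != set0 ->
    exists2 x, x \in A & #|nbhd e x :&: A| <= r.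

(* Main.v *)
Require Import Defs.
From mathcomp Require Import all_boot.
From mathcomp Require Import zify.

Lemma nb_split (T : finType) (e : rel T) (x : T) (B : {set T}) :
  #|nbhd e x :&: B| + #|nbhd e x :&: ~: B| = #|nbhd e x|.
Proof. by rewrite -setDE cardsID. Qed.

Theorem proposition4p1 (T : finType) (e : rel T) (k r : nat) :
  simple_graph e -> 1 <= k -> regular e (k + r) ->
  forall S : {set T}, conversion_set e k S <-> degenerate_induced e (~: S) r.
Proof.
move=> _ _ reg S; split.
- move=> [t Ht] A sA nA.
  have exP : exists n, A :&: conv_iter e k S n != set0.
    by exists t; rewrite Ht setIT.
  case: (ex_minnP exP) => m Hm Hmin.
  have A0 : A :&: conv_iter e k S 0 = set0.
    apply/setP => y; rewrite !inE /=; apply/andP => [[yA yS]].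
    by move/subsetP: sA => /(_ y yA); rewrite inE yS.
  case: m Hm Hmin => [|m] Hm Hmin; first by rewrite A0 eqxx in Hm.
  have Am : A :&: conv_iter e k S m = set0.
    apply/eqP; apply/negPn/negP => H; have := Hmin _ H; lia.
  case/set0Pn: Hm => x; rewrite inE => /andP [xA].
  rewrite /conv_iter iterS -/(conv_iter e k S m) /conv_step inE => /orP [xS|].
    by have : x \in A :&: conv_iter e k S m; [rewrite inE xA xS | rewrite Am inE].
  rewrite inE => Hk.
  exists x => //.
  have sub : nbhd e x :&: A \subset nbhd e x :&: ~: conv_iter e k S m.
    apply/subsetP => y; rewrite !inE => /andP [-> yA] /=.
    apply/negP => yS.
    by have : y \in A :&: conv_iter e k S m; [rewrite inE yA yS | rewrite Am inE].
  have := subset_leq_card sub; have := @nb_split _ e x (conv_iter e k S m).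
  rewrite reg; lia.
- move=> deg.
  have fix_full : forall t, conv_iter e k S t.+1 = conv_iter e k S t ->
      conv_iter e k S t = setT.
    move=> t Hfix; apply/setP => y; rewrite inE; apply/negPn/negP => yn.
    have nA : ~: conv_iter e k S t != set0 by apply/set0Pn; exists y; rewrite inE.
    have sA : ~: conv_iter e k S t \subset ~: S.
      rewrite setCS; elim: (t) => [|n IH] //=.
      by apply: subset_trans IH _; apply: subsetUl.
    case: (deg _ sA nA) => x xA Hx.
    have := @nb_split _ e x (conv_iter e k S t); rewrite reg => Hs.
    have : x \in conv_iter e k S t.+1.
      change (x \in conv_step e k (conv_iter e k S t)).
      rewrite /conv_step in_setU; apply/orP; right; rewrite inE; lia.
    by rewrite Hfix; move: xA; rewrite inE => /negPf ->.
  have mono : forall t, conv_iter e k S t \subset conv_iter e k S t.+1.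
    by move=> t; rewrite /conv_iter iterS /conv_step subsetUl.
  have key : forall t, conv_iter e k S t = setT \/ t <= #|conv_iter e k S t|.
    elim=> [|t [IH|IH]]; first by right.
    - left; rewrite /conv_iter iterS -/(conv_iter e k S t) IH.
      by apply/setP => y; rewrite /conv_step !inE.
    - case: (eqVneq (conv_iter e k S t.+1) (conv_iter e k S t)) => [H|H].
        left; rewrite H; exact: fix_full.
      right; have : conv_iter e k S t \proper conv_iter e k S t.+1.
        by rewrite properEneq mono eq_sym H.
      move/proper_card; lia.
  exists #|T|.+1; case: (key #|T|.+1) => // H.
  have := subset_leq_card (subsetT (conv_iter e k S #|T|.+1)); rewrite cardsT; lia.
Qed.
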